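(* Let $S$ be a one-dimensional tiling substitution with expansion constant $\beta>1$ and with $\vec h\in(r\mathbb{Q}(\beta))^m$ for some $r>0$, and suppose $\beta$ is a Pisot number. Let $T$ be a central tile whose endpoints belong to $\mathbb{Q}(\beta)$. Then there exist $K,L\in\mathbb N$ such that $\bar S^{NL+K}(T)=\bar S^{K}(T)$ for all $N>0$.
   Context: A Pisot number is an algebraic integer $\beta>1$ all of whose Galois conjugates $\beta'\ne\beta$ satisfy $|\beta'|<1$. A one-dimensional tiling substitution is built as follows: $\sigma:\mathcal A\to\mathcal A^*$ is a substitution on $\mathcal A=\{1,\dots,m\}$ (with $\mathcal A^*$ the nonempty finite words), its structure matrix $M$ ($M_{i,j}$ = number of occurrences of $j$ in $\sigma(i)$) has real eigenvalue $\beta>1$ with right eigenvector $\vec h=(h_1,\dots,h_m)$ having strictly positive entries. Prototiles are $P_j=[0,h_j)$ with label $j$; a tile is a labeled translate $P_j+s=[s,s+h_j)$. For a word $\mathbf w=j_1\cdots j_n$, $\pi(s,\mathbf w)=(P_{j_1}+s_1,\dots,P_{j_n}+s_n)$ with $s_1=s$, $s_{i+1}=s_i+h_{j_i}$; the substitution is $S(P_j+s)=\pi(\beta s,\sigma(j))$. A central tile is a tile $[s,t)$ with $s\le0<t$, and $\bar S(T)$ is the unique tile of $S(T)$ containing $0$. Equality of tiles means equal intervals with equal labels. *)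

(* Defs.v *)
From HB Require Import structures.
From mathcomp Require Import all_boot all_order all_algebra.
From mathcomp Require Import reals complex.
Set Implicit Arguments. Unset Strict Implicit. Unset Printing Implicit Defensive.
Import Order.TTheory GRing.Theory Num.Theory.
Local Open Scope ring_scope.

Section Tiling.
Variable R : realType.

Definition inQb (beta x : R) : Prop :=
  exists p q : {poly rat},
    (map_poly ratr q).[beta] != 0 /\
    x = (map_poly ratr p).[beta] / (map_poly ratr q).[beta].

(* Galois conjugates of an algebraic number beta: the complex roots of
   its minimal polynomial over Q.  An algebraic integer has a monic
   integer minimal polynomial. *)
Definition is_min_int_poly (beta : R) (p : {poly int}) : Prop :=
  p \is monic /\ root (map_poly intr p) beta /\
  irreducible_poly (map_poly intr p : {poly rat}).

Definition pisot (beta : R) : Prop :=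
  1 < beta /\
  exists p : {poly int}, is_min_int_poly beta p /\
    forall z : R[i], root (map_poly intr p) z -> z != (beta%:C)%C -> `|z| < 1.

Variable m : nat.

Definition struct_mx (sigma : 'I_m -> seq 'I_m) : 'M[R]_m :=
  \matrix_(i, j) (count_mem j (sigma i))%:R.

Definition tiling_subst (sigma : 'I_m -> seq 'I_m) (beta : R) (h : 'cV[R]_m)
  : Prop :=
  (forall i, 0 < size (sigma i))%N /\ 1 < beta /\
  struct_mx sigma *m h = beta *: h /\ (forall j, 0 < h j 0).

(* a tile P_j + s = [s, s + h_j) with label j is encoded by the pair (j, s);
   two tiles are equal (same interval, same label) iff the pairs are equal *)
Definition tile := ('I_m * R)%type.

Definition tile_left (T : tile) : R := T.2.
Definition tile_right (h : 'cV[R]_m) (T : tile) : R := T.2 + h T.1 0.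

Fixpoint pi_tiles (h : 'cV[R]_m) (s : R) (w : seq 'I_m) : seq tile :=
  match w with
  | [::] => [::]
  | j :: w' => (j, s) :: pi_tiles h (s + h j 0) w'
  end.

Definition subst_tile (sigma : 'I_m -> seq 'I_m) (beta : R) (h : 'cV[R]_m)
  (T : tile) : seq tile := pi_tiles h (beta * T.2) (sigma T.1).

Definition contains0 (h : 'cV[R]_m) (T : tile) : bool :=
  (tile_left T <= 0) && (0 < tile_right h T).

Definition central (h : 'cV[R]_m) (T : tile) : Prop := contains0 h T.

(* Sbar(T): the (unique, for central T) tile of S(T) containing 0
   (T itself is returned as an irrelevant default if there is none). *)
Definition Sbar (sigma : 'I_m -> seq 'I_m) (beta : R) (h : 'cV[R]_m)
  (T : tile) : tile :=
  nth T (subst_tile sigma beta h T)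
    (find (contains0 h) (subst_tile sigma beta h T)).

End Tiling.

(* Main.v *)
Require Import Defs.
From HB Require Import structures.
From mathcomp Require Import all_boot all_order all_algebra all_field.
From mathcomp Require Import reals complex polyorder ring lra zify.
Import Order.TTheory GRing.Theory Num.Theory.
Local Open Scope ring_scope.

Lemma iter_periodic (T : eqType) (f : T -> T) (x : T) (s : seq T) :
  (forall n, iter n f x \in s) ->
  exists K L : nat, (0 < L)%N /\
    forall N : nat, (0 < N)%N -> iter (N * L + K) f x = iter K f x.
Proof.
move=> Hs.
set t := [seq iter n f x | n <- iota 0 (size s).+1].
have : ~~ uniq t.
  apply/negP => Ut.
  have sub : {subset t <= s} by move=> y /mapP [n _ ->]; apply: Hs.
  by have := uniq_leq_size Ut sub; rewrite size_map size_iota ltnn.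
move=> /(uniqPn x) [i [j [ij jsz]]].
rewrite size_map size_iota in jsz.
rewrite !(nth_map 0%N) ?size_iota //; last by apply: ltn_trans jsz.
rewrite !nth_iota //; last by apply: ltn_trans jsz.
rewrite !add0n => Eij.
exists i, (j - i)%N; split; first by rewrite subn_gt0.
have HL : iter ((j - i) + i) f x = iter i f x by rewrite subnK ?(ltnW ij).
move=> N _; elim: N => [|N IH]; first by rewrite mul0n add0n.
by rewrite mulSn -addnA iterD IH -iterD HL.

Qed.

Section Lagrange.
Variable F : fieldType.

Definition Lg (rs : seq F) (z : F) : {poly F} :=
  (\prod_(y <- rs | y != z) (z - y))^-1 *: \prod_(y <- rs | y != z) ('X - y%:P).

Lemma Lg_eval (rs : seq F) z y : z \in rs -> y \in rs ->
  (Lg rs z).[y] = (y == z)%:R.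
Proof.
move=> zr yr; rewrite /Lg hornerZ horner_prod.
rewrite [X in _ * X](eq_bigr (fun i => y - i)); last by move=> i _; rewrite hornerXsubC.
have [->|yz] := eqVneq y z.
  rewrite mulVf // prodf_seq_neq0; apply/allP => y' _.
  by apply/implyP; rewrite subr_eq0 eq_sym.
by rewrite [X in _ * X](big_rem y) //= yz subrr mul0r mulr0.

Qed.

Lemma size_Lg (rs : seq F) z : z \in rs -> (size (Lg rs z) <= size rs)%N.
Proof.
move=> zr; apply: leq_trans (size_scale_leq _ _) _.
rewrite -big_filter size_prod_XsubC size_filter.
rewrite -(count_predC (pred1 z) rs).
have : (0 < count (pred1 z) rs)%N by rewrite -has_count has_pred1.
by case: (count (pred1 z) rs) => // n _; rewrite addSn ltnS leq_addl.
Qed.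

Lemma lagrange (rs : seq F) (q : {poly F}) : uniq rs -> (size q <= size rs)%N ->
  q = \sum_(z <- rs) q.[z] *: Lg rs z.
Proof.
move=> Urs Hq; apply/eqP; rewrite -subr_eq0; apply/negPn/negP => Hd.
have := max_poly_roots Hd _ Urs.
have -> : all (root (q - \sum_(z <- rs) q.[z] *: Lg rs z)) rs.
  apply/allP => y yr; rewrite /root hornerD hornerN horner_sum.
  rewrite (big_rem y) //= hornerZ Lg_eval // eqxx mulr1.
  rewrite big_seq big1 ?addr0 ?subrr //.
  move=> z; rewrite (mem_rem_uniq _ Urs) => /andP [zy zr].
  by rewrite hornerZ Lg_eval // eq_sym (negbTE zy) mulr0.
move=> /(_ isT); apply/negP; rewrite -leqNgt.
apply: leq_trans (size_polyD _ _) _; rewrite geq_max Hq /=.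
rewrite size_polyN big_seq_cond.
apply: (big_ind (fun p : {poly F} => size p <= size rs)%N) => //.
  by rewrite size_poly0.
  by move=> p1 q1 Hp Hq'; apply: leq_trans (size_polyD _ _) _; rewrite geq_max Hp.
move=> z /andP [zr _]; apply: leq_trans (size_scale_leq _ _) _.
exact: size_Lg.
Qed.

End Lagrange.
Arguments Lg {F} rs z.
Arguments lagrange {F} [rs q].

Section Sec3.
Local Open Scope complex_scope.

Lemma nonneg_complex_bound (R : realType) (c : R[i]) : 0 <= c ->
  exists N : nat, c <= N%:R.
Proof.
case: c => a b; rewrite lecE /= => /andP [/eqP b0 a0].
exists (Num.Def.archi_bound a); rewrite lecE /=.
have -> : (Num.Def.archi_bound a)%:R = ((Num.Def.archi_bound a)%:R)%:C :> R[i]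
  by rewrite rmorph_nat.
by rewrite /= b0 eqxx /=; apply: ltW; apply: archi_boundP.
Qed.

Lemma coef_bound (R : realType) (rs : seq R[i]) (B : R[i] -> R[i]) : uniq rs ->
  exists N : nat, forall g : {poly int}, (size g <= size rs)%N ->
    (forall z, z \in rs -> `|(map_poly intr g).[z]| <= B z) ->
    forall k, `|g`_k| <= N%:Z.
Proof.
move=> Urs.
pose Ck (k : nat) : R[i] := \sum_(z <- rs) `|B z| * `|(Lg rs z)`_k|.
pose Ctot := \sum_(k < size rs) Ck k.
have Ck0 k : 0 <= Ck k by apply: sumr_ge0 => z _; rewrite mulr_ge0.
have [N HN] : exists N : nat, Ctot <= N%:R.
  by apply: nonneg_complex_bound; apply: sumr_ge0.
exists N => g Hg HB k.
have [kl|kg] := ltnP k (size rs); last first.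
  by rewrite nth_default ?normr0 ?ler0n //; apply: leq_trans kg.
set q := map_poly (intr : int -> R[i]) g.
have Hq : (size q <= size rs)%N.
  by rewrite size_map_inj_poly //; apply: intr_inj.
have Eq := lagrange Urs Hq.
have Hk : q`_k = \sum_(z <- rs) q.[z] * (Lg rs z)`_k.
  by rewrite {1}Eq coef_sum; apply: eq_bigr => z _; rewrite coefZ.
have Hle : `|q`_k| <= Ctot.
  rewrite Hk; apply: le_trans (ler_norm_sum _ _ _) _.
  apply: le_trans (_ : Ck k <= Ctot).
    rewrite /Ck big_seq_cond [X in _ <= X]big_seq_cond.
    apply: ler_sum => z /andP [zr _]; rewrite normrM ler_wpM2r //.
    by apply: le_trans (HB z zr) _; apply: real_ler_norm; apply: ger0_real;
       apply: le_trans (HB z zr).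
  rewrite /Ctot (bigD1 (Ordinal kl)) //= lerDl.
  by apply: sumr_ge0 => i _.
rewrite -(ler_int R[i]) intr_norm.
by apply: le_trans HN; rewrite /q coef_map /= in Hle.
Qed.

End Sec3.

Section Sec4.
Local Open Scope complex_scope.

Lemma irred_separable (p : {poly rat}) : irreducible_poly p -> separable_poly p.
Proof.
move=> Ip; have [Hs Hirr] := Ip.
rewrite unlock coprimep_def.
apply/negPn/negP => HG.
have Gp : gcdp p p^`() %= p by apply: Hirr => //; apply: dvdp_gcdl.
have pd : p %| p^`() by rewrite -(eqp_dvdl _ Gp) dvdp_gcdr.
have d0 : p^`() != 0.
  by rewrite -size_poly_gt0 size_deriv -subn1 subn_gt0.
have := dvdp_leq d0 pd; rewrite size_deriv.
by case: (size p) Hs => // n _; rewrite ltnn.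
Qed.

Lemma pisot_roots (R : realType) (beta : R) (p : {poly int}) :
  p \is monic -> root (map_poly intr p) beta ->
  irreducible_poly (map_poly intr p : {poly rat}) ->
  exists rs : seq R[i], [/\ uniq rs,
    map_poly intr p = \prod_(z <- rs) ('X - z%:P), beta%:C \in rs &
    size p = (size rs).+1].
Proof.
move=> Mp Rp Ip.
set pC := map_poly (intr : int -> R[i]) p.
have EpC : pC = map_poly (ratr : rat -> R[i]) (map_poly intr p).
  rewrite -map_poly_comp; apply: eq_map_poly => x /=; by rewrite ratr_int.
have MpC : pC \is monic by apply: monic_map.
have [rs Ers] := closed_field_poly_normal pC.
rewrite (monicP MpC) scale1r in Ers.
exists rs; split => //.
- rewrite -separable_prod_XsubC -Ers EpC separable_map.
  exact: irred_separable.
- rewrite -root_prod_XsubC -Ers.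
  have -> : pC = map_poly (real_complex R) (map_poly (intr : int -> R) p).
    rewrite -map_poly_comp; apply: eq_map_poly => x /=; by rewrite rmorph_int.
  by rewrite /root horner_map (eqP Rp).
- rewrite -(size_prod_XsubC rs id) -Ers /pC size_map_inj_poly //.
  exact: intr_inj.
Qed.

End Sec4.

Section QB.
Set Implicit Arguments. Unset Strict Implicit.
Variable R : realType.
Variable beta : R.

Definition evQ (q : {poly rat}) : R := (map_poly (ratr : rat -> R) q).[beta].
Definition evZ (q : {poly int}) : R := (map_poly (intr : int -> R) q).[beta].

Lemma evQM p q : evQ (p * q) = evQ p * evQ q.
Proof. by rewrite /evQ rmorphM hornerM. Qed.
Lemma evQB p q : evQ (p - q) = evQ p - evQ q.
Proof. by rewrite /evQ rmorphB hornerD hornerN. Qed.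
Lemma evZM p q : evZ (p * q) = evZ p * evZ q.
Proof. by rewrite /evZ rmorphM hornerM. Qed.
Lemma evZC c : evZ c%:P = c%:~R.
Proof. by rewrite /evZ map_polyC hornerC. Qed.

Lemma inQb_sub x y : inQb beta x -> inQb beta y -> inQb beta (x - y).
Proof.
move=> [a [b [b0 ->]]] [c [d [d0 ->]]].
exists (a * d - c * b), (b * d).
change (evQ (b * d) != 0 /\ evQ a / evQ b - evQ c / evQ d = evQ (a*d - c*b) / evQ (b*d)).
change (is_true (evQ b != 0)) in b0; change (is_true (evQ d != 0)) in d0.
rewrite !(evQB, evQM) mulf_neq0 //; split => //; field.
by rewrite b0 d0.
Qed.

Lemma inQb_mul x y : inQb beta x -> inQb beta y -> inQb beta (x * y).
Proof.
move=> [a [b [b0 ->]]] [c [d [d0 ->]]].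
exists (a * c), (b * d).
change (evQ (b * d) != 0 /\ evQ a / evQ b * (evQ c / evQ d) = evQ (a*c) / evQ (b*d)).
change (is_true (evQ b != 0)) in b0; change (is_true (evQ d != 0)) in d0.
rewrite !(evQB, evQM) mulf_neq0 //; split => //; field.
by rewrite b0 d0.
Qed.

Lemma inQb_div x y : inQb beta x -> inQb beta y -> y != 0 -> inQb beta (x / y).
Proof.
move=> [a [b [b0 ->]]] [c [d [d0 ->]]].
change (is_true (evQ b != 0)) in b0; change (is_true (evQ d != 0)) in d0.
change (evQ c / evQ d != 0 -> inQb beta (evQ a / evQ b / (evQ c / evQ d))) => yn0.
have c0 : evQ c != 0 by move: yn0; rewrite mulf_eq0 negb_or => /andP [].
exists (a * d), (b * c).
change (evQ (b * c) != 0 /\ evQ a / evQ b / (evQ c / evQ d) = evQ (a*d) / evQ (b*c)).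
rewrite !(evQB, evQM) mulf_neq0 //; split => //; field.
by rewrite b0 c0 d0.
Qed.

Lemma evQ_int (q : {poly int}) : evQ (map_poly intr q) = evZ q.
Proof.
rewrite /evQ /evZ -map_poly_comp; congr (_.[_]); apply: eq_map_poly => x /=.
by rewrite ratr_int.
Qed.

Lemma evQ_scale c q : evQ (c *: q) = ratr c * evQ q.
Proof. by rewrite /evQ map_polyZ hornerZ. Qed.

Lemma inQb_int x : inQb beta x -> exists a b : {poly int},
  evZ b != 0 /\ x = evZ a / evZ b.
Proof.
move=> [a [b [b0 ->]]].
change (is_true (evQ b != 0)) in b0; change (exists a0 b2 : {poly int}, evZ b2 != 0 /\ evQ a / evQ b = evZ a0 / evZ b2).
have [a' [a1 a10 Ea]] := rat_poly_scale a.
have [b' [b1 b10 Eb]] := rat_poly_scale b.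
rewrite Ea Eb !evQ_scale !evQ_int in b0 *.
have b1R : (b1%:~R : R) != 0 by rewrite intr_eq0.
have a1R : (a1%:~R : R) != 0 by rewrite intr_eq0.
rewrite !fmorphV /= !ratr_int in b0 *.
have eb : evZ b' != 0 by move: b0; rewrite mulf_eq0 negb_or => /andP [].
exists (b1%:P * a'), (a1%:P * b'); rewrite !evZM !evZC; split.
  by rewrite mulf_neq0.
by field; rewrite a1R b1R eb.
Qed.

End QB.
Arguments evZ {R} beta q. Arguments evQ {R} beta q.

Section Til.
Variable R : realType.
Variable m : nat.

Lemma pi_tiles_mem (h : 'cV[R]_m) (w : seq 'I_m) (s : R) (t : tile R m) :
  t \in pi_tiles h s w ->
  exists i, (i <= size w)%N /\ t.2 = s + \sum_(k <- take i w) h k 0.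
Proof.
elim: w s => [|j w IH] s //=.
rewrite in_cons => /orP [/eqP -> | /IH [i [Hi ->]]].
  by exists 0%N; rewrite take0 big_nil addr0.
exists i.+1; split => //=; by rewrite big_cons addrA.
Qed.

Lemma Sbar_cases (sigma : 'I_m -> seq 'I_m) (beta : R) (h : 'cV[R]_m) (T : tile R m) :
  Sbar sigma beta h T = T \/
  (Sbar sigma beta h T \in subst_tile sigma beta h T /\ contains0 h (Sbar sigma beta h T)).
Proof.
rewrite /Sbar; set l := subst_tile sigma beta h T.
have [Hh|Hh] := boolP (has (contains0 h) l).
  right; split; last exact: nth_find.
  by apply: mem_nth; rewrite -has_find.
by left; rewrite nth_default // leqNgt -has_find.
Qed.

End Til.
Arguments Sbar_cases {R m} sigma beta h T. Arguments pi_tiles_mem {R m h w s t}.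

Section Sec7.
Local Open Scope complex_scope.

Lemma normC_real (R : realType) (x : R) : `|x%:C| = `|x|%:C.
Proof. by rewrite normc_def /= expr0n addr0 sqrtr_sqr. Qed.

Lemma mod_eval (K : comNzRingType) (p a : {poly int}) (z : K) :
  p \is monic -> root (map_poly intr p) z ->
  (map_poly intr (a %% p)).[z] = (map_poly intr a).[z].
Proof.
move=> Mp /eqP Rz.
rewrite [in RHS](Pdiv.IdomainMonic.divp_eq Mp a) rmorphD rmorphM /=.
by rewrite hornerD hornerM Rz mulr0 add0r.
Qed.

Lemma evZ_sum (R : realType) (beta : R) (I : Type) (r : seq I) (F : I -> {poly int}) :
  evZ beta (\sum_(i <- r) F i) = \sum_(i <- r) evZ beta (F i).
Proof. by rewrite /evZ rmorph_sum horner_sum. Qed.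

Lemma evZ_prod (R : realType) (beta : R) (I : finType) (P : pred I) (F : I -> {poly int}) :
  evZ beta (\prod_(i | P i) F i) = \prod_(i | P i) evZ beta (F i).
Proof. by rewrite /evZ rmorph_prod horner_prod. Qed.

Lemma evZ_MX (R : realType) (beta : R) (g : {poly int}) :
  evZ beta (g * 'X) = evZ beta g * beta.
Proof. by rewrite /evZ rmorphM /= map_polyX hornerMX. Qed.

Lemma evC_MX (R : realType) (z : R[i]) (g : {poly int}) :
  (map_poly intr (g * 'X)).[z] = (map_poly intr g).[z] * z.
Proof. by rewrite rmorphM /= map_polyX hornerMX. Qed.

Lemma evC_real (R : realType) (beta : R) (g : {poly int}) :
  (map_poly (intr : int -> R[i]) g).[beta%:C] = (evZ beta g)%:C.
Proof.
have -> : map_poly (intr : int -> R[i]) g = map_poly (real_complex R) (map_poly (intr : int -> R) g).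
  rewrite -map_poly_comp; apply: eq_map_poly => x /=; by rewrite rmorph_int.
by rewrite horner_map.
Qed.

End Sec7.

Unset Implicit Arguments. Set Strict Implicit.

Lemma absz_shift (x : int) (N : nat) : `|x| <= N%:Z ->
  ((absz (x + N%:Z)%R)%:Z - N%:Z = x /\ (absz (x + N%:Z)%R < (N+N).+1)%N).
Proof. rewrite ler_norml => /andP [H1 H2]; split; lia. Qed.

Theorem mainTheorem3 (R : realType) (m : nat) (sigma : 'I_m -> seq 'I_m)
  (beta : R) (h : 'cV[R]_m) (T : tile R m) :
  tiling_subst sigma beta h ->
  (exists r : R, 0 < r /\ forall j : 'I_m, inQb beta (h j 0 / r)) ->
  pisot beta ->
  central h T ->
  inQb beta (tile_left T) -> inQb beta (tile_right h T) ->
  exists K L : nat, (0 < L)%N /\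
    forall N : nat, (0 < N)%N ->
      iter (N * L + K) (Sbar sigma beta h) T = iter K (Sbar sigma beta h) T.
Proof.
move=> [_ [_ [_ hpos]]] [r [r0 Hr]] [_ [p [[Mp [Rp Ip]] Hconj]]] HcT HL HR.
have hT : inQb beta (h T.1 0).
  have := inQb_sub HR HL; rewrite /tile_right /tile_left addrC addKr.
  by [].
have rQ : inQb beta r.
  have -> : r = h T.1 0 / (h T.1 0 / r).
    by field; rewrite ?gt_eqF ?hpos.
  apply: inQb_div; [exact: hT | exact: Hr | ].
  by rewrite mulf_neq0 ?invr_eq0 ?gt_eqF ?hpos.
have hQ j : inQb beta (h j 0).
  have -> : h j 0 = r * (h j 0 / r) by field; rewrite gt_eqF.
  exact: inQb_mul.
pose Pj (j : 'I_m) := fun ab : {poly int} * {poly int} =>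
  (evZ beta ab.2 != 0) && (h j 0 == evZ beta ab.1 / evZ beta ab.2).
have exPj j : exists ab, Pj j ab.
  have [a [b [b0 E]]] := inQb_int (hQ j).
  by exists (a, b); rewrite /Pj /= b0 E eqxx.
pose ab j := xchoose (exPj j).
have abP j : Pj j (ab j) := xchooseP (exPj j).
have [a0 [b0 [b00 Ea0]]] := inQb_int HL.
pose E := evZ beta b0 * \prod_j evZ beta (ab j).2.
have E0 : E != 0.
  rewrite mulf_neq0 //; apply/prodf_neq0 => j _.
  by case/andP: (abP j).
pose Aj (j : 'I_m) := b0 * (ab j).1 * \prod_(k | k != j) (ab k).2.
have EAj j : E * h j 0 = evZ beta (Aj j).
  case/andP: (abP j) => nz /eqP ->.
  rewrite /E /Aj !evZM evZ_prod (bigD1 j) //=.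
  by field.
pose G0 := a0 * \prod_j (ab j).2.
have EG0 : E * T.2 = evZ beta G0.
  rewrite /E /G0 evZM evZ_prod; move: Ea0; rewrite /tile_left => ->.
  by field.

have [rs [Urs Ep rsb Sp]] := @pisot_roots R beta p Mp Rp Ip.
set d := size rs.
have p0 : p != 0 := monic_neq0 Mp.
have Hrs z : z \in rs -> root (map_poly (intr : int -> R[i]) p) z.
  by move=> zr; rewrite Ep root_prod_XsubC.
have Hlt1 z : z \in rs -> z != (beta%:C)%C -> `|z| < 1.
  by move=> zr; apply: Hconj; apply: Hrs.
have evZD q1 q2 : evZ beta (q1 + q2) = evZ beta q1 + evZ beta q2.
  by rewrite /evZ rmorphD hornerD.
have evZmod q : evZ beta (q %% p) = evZ beta q by apply: mod_eval.
pose Smax := (\max_(j < m) size (sigma j))%N.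
pose W := [seq \sum_(k <- take i (sigma j)) Aj k | j <- enum 'I_m, i <- iota 0 Smax.+1].
pose evC (g : {poly int}) (z : R[i]) := (map_poly (intr : int -> R[i]) g).[z].
pose g0 := G0 %% p.
pose Mz z := \sum_(w <- W) `|evC w z|.
pose H := \sum_j h j 0.
pose Bf z := if z == (beta%:C)%C then ((`|E| * H)%:C)%C
             else `|evC g0 z| + Mz z / (1 - `|z|).
have Mz0 z : 0 <= Mz z by apply: sumr_ge0 => w _.
have cenH t : central h t -> `|t.2| <= H.
  rewrite /central /contains0 /tile_left /tile_right => /andP [t1 t2].
  have : h t.1 0 <= H.
    rewrite /H (bigD1 t.1) //= lerDl; apply: sumr_ge0 => j _.
    exact: ltW.
  rewrite ler0_norm //; lra.
have hb t g : central h t -> E * t.2 = evZ beta g ->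
    `|evC g (beta%:C)%C| <= ((`|E| * H)%:C)%C.
  move=> Ct Eg; rewrite /evC evC_real -Eg normC_real lecR normrM.
  by rewrite ler_wpM2l // cenH.
pose Inv t := central h t /\ exists g : {poly int}, [/\ (size g <= d)%N,
  E * t.2 = evZ beta g & forall z, z \in rs -> `|evC g z| <= Bf z].
have Inv0 : Inv T.
  split => //; exists g0; split.
  - by rewrite -ltnS -Sp ltn_modp.
  - by rewrite /g0 evZmod.
  move=> z zr; rewrite /Bf; case: eqVneq => [->|zb].
    by apply: (hb T) => //; rewrite /g0 evZmod.
  rewrite lerDl divr_ge0 // subr_ge0 ltW //; exact: Hlt1.
have InvS t : Inv t -> Inv (Sbar sigma beta h t).
  move=> [Ct [g [Sg Eg Bg]]].
  case: (Sbar_cases sigma beta h t) => [-> | [Hin Hc']]; first by split => //; exists g.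
  set t' := Sbar sigma beta h t in Hin Hc' *.
  have [i [Hi Ht']] := pi_tiles_mem Hin.
  set w := \sum_(k <- take i (sigma t.1)) Aj k.
  have wW : w \in W.
    apply: (allpairs_f (fun j i => \sum_(k <- take i (sigma j)) Aj k)).
      by rewrite mem_enum.
    rewrite mem_iota add0n ltnS (leq_trans Hi) //.
    exact: (@leq_bigmax _ (fun j => size (sigma j)) t.1).
  split => //; exists ((g * 'X + w) %% p); split.
  - by rewrite -ltnS -Sp ltn_modp.
  - rewrite evZmod evZD evZ_MX /w evZ_sum Ht' mulrDr mulr_sumr.
    rewrite mulrCA Eg mulrC; congr (_ + _).
    by apply: eq_bigr => k _; apply: EAj.
  move=> z zr; rewrite /Bf; case: eqVneq => [->|zb].
    apply: (hb t') => //.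
    rewrite evZmod evZD evZ_MX /w evZ_sum Ht' mulrDr mulr_sumr.
    rewrite mulrCA Eg mulrC; congr (_ + _).
    by apply: eq_bigr => k _; apply: EAj.
  have -> : evC ((g * 'X + w) %% p) z = evC g z * z + evC w z.
    by rewrite /evC mod_eval ?Hrs // rmorphD hornerD evC_MX.
  have Hz1 := Hlt1 z zr zb.
  have c1 : 0 < 1 - `|z| by rewrite subr_gt0.
  have Bgz := Bg z zr; rewrite /Bf (negbTE zb) in Bgz.
  set B := `|evC g0 z| + Mz z / (1 - `|z|) in Bgz *.
  have wM : `|evC w z| <= Mz z.
    by rewrite /Mz (big_rem w wW) /= lerDl; apply: sumr_ge0.
  apply: le_trans (ler_normD _ _) _.
  apply: le_trans (_ : B * `|z| + Mz z <= B).
    by rewrite normrM lerD // ler_wpM2r.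
  have -> : B * `|z| + Mz z = B - `|evC g0 z| * (1 - `|z|).
    by rewrite /B; field; rewrite gt_eqF.
  by rewrite gerBl mulr_ge0 // ltW.
have [N HN] := @coef_bound R rs Bf Urs.
pose dec (f : d.-tuple 'I_(N + N).+1) : {poly int} :=
  \poly_(k < d) ((nth ord0 f k : nat)%:Z - N%:Z).
pose L := [seq (j, evZ beta (dec f) / E) | j <- enum 'I_m,
                                         f <- enum {: d.-tuple 'I_(N + N).+1}].
have InvL t : Inv t -> t \in L.
  move=> [_ [g [Sg Eg Bg]]].
  have Hc k : `|g`_k| <= N%:Z := HN g Sg Bg k.
  pose f := mktuple (fun k : 'I_d => (inord (absz (g`_k + N%:Z)) : 'I_(N + N).+1)).
  have Df : dec f = g.
    apply/polyP => k; rewrite coef_poly; case: ltnP => kd.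
      rewrite -[k]/(nat_of_ord (Ordinal kd)) nth_mktuple /=.
      have [E1 E2] := @absz_shift _ _ (Hc k).
      by rewrite inordK.
    by rewrite nth_default // (leq_trans Sg kd).
  have -> : t = (t.1, evZ beta (dec f) / E).
    case: t Eg => j s /= Eg; rewrite Df -Eg; congr (_, _); by field.
  apply: (allpairs_f (fun j f => (j, evZ beta (dec f) / E))); by rewrite mem_enum.
apply: (@iter_periodic _ _ _ L) => n.
apply: InvL; elim: n => [|n IH] //=.
exact: InvS.
Qed.
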